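(* In the subgroup setting described in the context: (1) for all integers $k,l\geq 0$, $R(k,l)\subseteq B_G(1_G,k+l)$; (2) for every integer $k\geq 0$, $B_G(1_G,k)\subseteq R(k,\Lambda(k))$, where $\Lambda(k)=\max_{g\in B_G(1_G,k)}\|g\|_H$.
   Context: $G$ is a finitely generated group and $H$ a finitely generated subgroup. $E_H$ is a finite generating set of $H$ closed under inverses and $D\supseteq E_H$ a finite generating set of $G$ closed under inverses; $d_H$, $d_G$ are the corresponding word metrics, $B_G(1_G,k)$ the closed ball of radius $k$ in $d_G$, $\|g\|_G=d_G(1_G,g)$. $F\subseteq G$ contains exactly one element of each left coset $gH$, chosen as an element of minimal $\|\cdot\|_G$ in that coset (with $1_G$ chosen for $H$); so every $g$ is uniquely $g=fh$, $f\in F$, $h\in H$, and $\|g\|_G\geq\|f\|_G$ for all $g\in fH$. Define $\pi(g)=f^{-1}g\in H$ for $g\in fH$, $\|g\|_H=d_H(1_G,\pi(g))$, and $\omega(g)=d_G(1_G,gH)=\|f\|_G$ for $g\in fH$. The rectangle of height $k$ and length $l$ is $R(k,l)=\{g\in G:\omega(g)\leq k,\ \|g\|_H\leq l\}$. *)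

(* Defs.v *)
From Stdlib Require Import List Arith Lia ClassicalEpsilon.
Import ListNotations.
Set Implicit Arguments.

Record Group := {
  gcar :> Type;
  gmul : gcar -> gcar -> gcar;
  ginv : gcar -> gcar;
  gone : gcar;
  gmulA : forall x y z, gmul x (gmul y z) = gmul (gmul x y) z;
  gmul1 : forall x, gmul gone x = x;
  gmulV : forall x, gmul (ginv x) x = gone
}.

Section Defs.
Context {G : Group}.

Definition wprod (w : list G) : G := fold_right (gmul G) (gone G) w.

Definition wordlen (S : list G) (g : G) (n : nat) : Prop :=
  exists w : list G, Forall (fun x => In x S) w /\ length w = n /\ wprod w = g.

(* word norm ||g||_S = d_S(1,g): least length of a word over S representing g
   (chosen by classical description; meaningful when S generates g) *)
Definition wnorm (S : list G) (g : G) : nat :=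
  epsilon (inhabits 0)
    (fun n => wordlen S g n /\ forall m, wordlen S g m -> n <= m).

Definition ball (S : list G) (k : nat) (g : G) : Prop := wnorm S g <= k.

Definition is_subgroup (H : G -> Prop) : Prop :=
  H (gone G) /\ (forall x y, H x -> H y -> H (gmul G x y)) /\
  (forall x, H x -> H (ginv G x)).

(* S generates the subgroup H (as a monoid; S is also inverse-closed) *)
Definition generates (S : list G) (H : G -> Prop) : Prop :=
  (forall x, In x S -> H x) /\
  (forall h, H h -> exists w, Forall (fun x => In x S) w /\ wprod w = h).

Definition inv_closed (S : list G) : Prop :=
  forall x, In x S -> In (ginv G x) S.

Variables (H : G -> Prop) (D EH : list G) (F : G -> Prop).

Definition rep (g : G) : G :=
  epsilon (inhabits (gone G)) (fun f => F f /\ H (gmul G (ginv G f) g)).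

Definition proj (g : G) : G := gmul G (ginv G (rep g)) g.

Definition normH (g : G) : nat := wnorm EH (proj g).

(* omega(g) = d_G(1, gH) = ||f||_G *)
Definition omega (g : G) : nat := wnorm D (rep g).

Definition rect (k l : nat) (g : G) : Prop := omega g <= k /\ normH g <= l.

Definition Lambda (k : nat) : nat :=
  epsilon (inhabits 0)
    (fun L => (exists g, ball D k g /\ normH g = L) /\
              (forall g, ball D k g -> normH g <= L)).

End Defs.

(* Main.v *)
Require Import Defs.
From Stdlib Require Import List Arith Lia Classical ClassicalEpsilon.
Import ListNotations.

Lemma min_ex (P : nat -> Prop) : (exists n, P n) -> exists n, P n /\ forall m, P m -> n <= m.
Proof.
  intros [n Pn]. induction n as [n IH] using lt_wf_ind.
  destruct (classic (exists m, m < n /\ P m)) as [[m [Hm Pm]]|Hno].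
  - exact (IH m Hm Pm).
  - exists n; split; auto. intros m Pm. destruct (le_lt_dec n m); auto.
    exfalso; apply Hno; eauto.
Qed.

Lemma max_ex (Q : nat -> Prop) B : (forall n, Q n -> n <= B) -> (exists n, Q n) ->
  exists L, Q L /\ forall n, Q n -> n <= L.
Proof.
  induction B as [|B IH]; intros Hb [n Qn].
  - exists n; split; auto. intros m Qm. pose proof (Hb m Qm). pose proof (Hb n Qn). lia.
  - destruct (classic (Q (S B))) as [Y|N].
    + exists (S B); split; auto.
    + apply IH; eauto. intros m Qm. specialize (Hb m Qm).
      destruct (Nat.eq_dec m (S B)); [subst; contradiction | lia].
Qed.

Section S.
Context {G : Group}.

Lemma mulV_r (x : G) : gmul G x (ginv G x) = gone G.
Proof.
  rewrite <- (gmul1 G (gmul G x (ginv G x))).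
  rewrite <- (gmulV G (ginv G x)) at 1.
  rewrite <- gmulA. rewrite (gmulA G (ginv G x) x (ginv G x)).
  rewrite gmulV, gmul1. apply gmulV.
Qed.

Lemma mul_inv_cancel (f g : G) : gmul G f (gmul G (ginv G f) g) = g.
Proof. rewrite gmulA, mulV_r. apply gmul1. Qed.

Lemma wprod_app (w1 w2 : list G) : wprod (w1 ++ w2) = gmul G (wprod w1) (wprod w2).
Proof.
  induction w1 as [|x w1 IH]; simpl.
  - rewrite gmul1; reflexivity.
  - unfold wprod in *; simpl. rewrite IH, gmulA; reflexivity.
Qed.

Lemma wnorm_spec {S : list G} {g : G} : (exists n, wordlen S g n) ->
  wordlen S g (wnorm S g) /\ forall m, wordlen S g m -> wnorm S g <= m.
Proof.
  intro E. unfold wnorm. apply epsilon_spec. apply min_ex. exact E.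
Qed.

Lemma list_bound (A : Type) (l : list A) (Q : A -> nat -> Prop) :
  (forall x, In x l -> exists B, forall B', B <= B' -> Q x B') ->
  exists B, forall x, In x l -> forall B', B <= B' -> Q x B'.
Proof.
  induction l as [|a l IH]; intros Hx.
  - exists 0; intros x [].
  - destruct (Hx a (or_introl eq_refl)) as [Ba HBa].
    destruct IH as [Bl HBl]. { intros x Hin; apply Hx; right; auto. }
    exists (max Ba Bl). intros x [<-|Hin] B' HB'.
    + apply HBa; lia.
    + apply HBl; auto; lia.
Qed.

Lemma word_bound (D : list G) k : forall phi : G -> nat, exists B, forall w,
  Forall (fun x => In x D) w -> length w <= k -> phi (wprod w) <= B.
Proof.
  induction k as [|k IH]; intro phi.
  - exists (phi (gone G)). intros [|x w] _ Hl; simpl in *; [auto | lia].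
  - destruct (@list_bound G D (fun x B => forall w, Forall (fun x => In x D) w ->
       length w <= k -> phi (gmul G x (wprod w)) <= B)) as [B HB].
    { intros x _. destruct (IH (fun y => phi (gmul G x y))) as [B HB].
      exists B. intros B' HB' w Hw Hl. specialize (HB w Hw Hl). simpl in HB. lia. }
    exists (max (phi (gone G)) B). intros [|x w] Hw Hl; simpl in *.
    + lia.
    + inversion Hw; subst.
      assert (phi (gmul G x (wprod w)) <= B) by (apply (HB x); auto; lia).
      unfold wprod in *. simpl. lia.
Qed.

End S.

Theorem proposition4 (G : Group) (H : G -> Prop) (EH D : list G) (F : G -> Prop)
  (HH : is_subgroup H)
  (HEH : generates EH H) (HEHinv : inv_closed EH)
  (HD : generates D (fun _ => True)) (HDinv : inv_closed D)
  (HEHD : incl EH D)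
  (HFex : forall g : G, exists f, F f /\ H (gmul G (ginv G f) g))
  (HFuniq : forall f1 f2 : G, F f1 -> F f2 -> H (gmul G (ginv G f1) f2) -> f1 = f2)
  (HFmin : forall f h : G, F f -> H h -> wnorm D f <= wnorm D (gmul G f h))
  (HF1 : F (gone G)) :
  (forall (k l : nat) (g : G), rect H D EH F k l g -> ball D (k + l) g) /\
  (forall (k : nat) (g : G), ball D k g -> rect H D EH F k (Lambda H D EH F k) g).
Proof.
  assert (Hrep : forall g, F (rep H F g) /\ H (proj H F g)).
  { intro g. unfold proj, rep. apply epsilon_spec. apply HFex. }
  assert (Hdec : forall g, gmul G (rep H F g) (proj H F g) = g).
  { intro g. unfold proj. apply mul_inv_cancel. }
  assert (HDw : forall g, exists n, wordlen D g n).
  { intro g. destruct (proj2 HD g I) as [w [Hw Hp]]. exists (length w); exists w; auto. }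
  assert (HEw : forall g, exists n, wordlen EH (proj H F g) n).
  { intro g. destruct (proj2 HEH (proj H F g) (proj2 (Hrep g))) as [w [Hw Hp]].
    exists (length w); exists w; auto. }
  split.
  - intros k l g [Ho Hn]. unfold ball, omega, normH in *.
    destruct (wnorm_spec (HDw (rep H F g))) as [[w1 [F1 [L1 P1]]] _].
    destruct (wnorm_spec (HEw g)) as [[w2 [F2 [L2 P2]]] _].
    destruct (wnorm_spec (HDw g)) as [_ Hmin].
    assert (wnorm D g <= length (w1 ++ w2)).
    { apply Hmin. exists (w1 ++ w2). split; [|split; auto].
      - apply Forall_app; split; auto. eapply Forall_impl; [|exact F2]. intros; auto.
      - rewrite wprod_app, P1, P2. apply Hdec. }
    rewrite length_app in H0. lia.
  - intros k g Hb. split.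
    + unfold omega, ball in *. rewrite <- (Hdec g) in Hb at 1.
      pose proof (HFmin _ _ (proj1 (Hrep g)) (proj2 (Hrep g))). lia.
    + assert (Hs : (exists g', ball D k g' /\ normH H EH F g' = Lambda H D EH F k) /\
               (forall g', ball D k g' -> normH H EH F g' <= Lambda H D EH F k)).
      { unfold Lambda. apply epsilon_spec.
        destruct (word_bound D k (normH H EH F)) as [B HB].
        assert (Hbd : forall n, (exists g', ball D k g' /\ normH H EH F g' = n) -> n <= B).
        { intros n [g' [Hb' <-]]. unfold ball in Hb'.
          destruct (wnorm_spec (HDw g')) as [[w [Fw [Lw Pw]]] _].
          rewrite <- Pw. apply HB; auto. lia. }
        destruct (max_ex _ B Hbd (ex_intro _ _ (ex_intro _ g (conj Hb eq_refl))))
          as [L [HL1 HL2]].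
        exists L. split; [exact HL1|]. intros g0 Hg0. apply HL2. eauto. }
      apply (proj2 Hs); auto.
Qed.
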